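(* Let $n\geq 3$. There exists an $(S_1\times S_{n-1})$-equivariant acyclic matching on the face poset of $\Delta(\overline{\Pi}_n)$ such that the set of critical simplices is $C_n\cup\{\alpha_n\}$.
   Context: $\Pi_n$ is the poset of all set partitions of $[n]=\{1,\dots,n\}$ ordered by refinement (finer is smaller), and $\overline{\Pi}_n$ is obtained by removing the minimum $\{\{1\},\dots,\{n\}\}$ and maximum $\{[n]\}$. $\Delta(\overline{\Pi}_n)$ is its nerve (order complex): its simplices are the nonempty chains $x_0<x_1<\dots<x_k$ of $\overline{\Pi}_n$ (of dimension $k$), and its face poset is the set of these simplices ordered by inclusion. $S_n$ acts on $[n]$, hence on $\overline{\Pi}_n$ and on $\Delta(\overline{\Pi}_n)$; $S_1\times S_{n-1}=\{\sigma\in S_n\mid\sigma(1)=1\}$. Let $A$ be the set of partitions in $\overline{\Pi}_n$ in which every block not containing $1$ is a singleton; $C_n$ is the set of simplices of dimension $n-3$ all of whose vertices lie in $A$; $\alpha_n$ is the vertex (0-simplex) $\{\{1\},\{2,\dots,n\}\}$. A partial matching on a poset is a set of pairs $(a,b)$ with $b$ covering $a$ such that each element lies in at most one pair; it is acyclic if there is no cycle $b_1>a_1<b_2>a_2<\dots<b_t>a_t<b_1$, $t\ge2$, with distinct $b_i$ and $(a_i,b_i)$ in the matching; critical elements are the unmatched ones; a matching is $H$-equivariant if $(a,b)$ in it implies $(ha,hb)$ in it for all $h\in H$. *)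

(* Defs.v *)
(* Elements 1..n of [n] are represented by 'I_n (value i <-> i+1). *)
From mathcomp Require Import all_boot fingroup perm.
Set Implicit Arguments. Unset Strict Implicit. Unset Printing Implicit Defensive.

Section PartitionLattice.
Variable n : nat.

Definition elt := 'I_n.
Definition setpart := {set {set elt}}.
Definition simplex := {set setpart}.

Definition is_one (i : elt) : bool := val i == 0.

Definition is_setpart (P : setpart) : bool := partition P [set: elt].

Definition refines (P Q : setpart) : bool :=
  [forall B in P, exists C in Q, B \subset C].

Definition finest : setpart := [set [set i] | i : elt].
Definition coarsest : setpart := [set [set: elt]].

Definition proper_part (P : setpart) : bool :=
  [&& is_setpart P, P != finest & P != coarsest].

Definition is_simplex (c : simplex) : bool :=
  [&& c != set0, [forall P in c, proper_part P] &
      [forall P in c, forall Q in c, refines P Q || refines Q P]].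

Definition dim (c : simplex) : nat := #|c|.-1.

Definition covers (a b : simplex) : bool := (a \proper b) && (#|b| == #|a|.+1).

Definition fixes_one (s : {perm elt}) : bool := [forall i, is_one i ==> is_one (s i)].
Definition act_part (s : {perm elt}) (P : setpart) : setpart := [set (s @: B) | B : {set elt} in P].
Definition act_simplex (s : {perm elt}) (c : simplex) : simplex :=
  [set act_part s P | P in c].

Definition is_matching (M : {set simplex * simplex}) : bool :=
  [forall p in M, [&& is_simplex p.1, is_simplex p.2 & covers p.1 p.2]] &&
  [forall p in M, forall q in M,
     [&& (p.1 == q.1) ==> (p == q), (p.2 == q.2) ==> (p == q),
         p.1 != q.2 & p.2 != q.1]].

(* a cycle b_1 > a_1 < b_2 > a_2 < ... < b_t > a_t < b_1, t >= 2, distinct b_i,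
   (a_i,b_i) in M; given as the sequence of pairs (a_i,b_i) *)
Definition is_cycle (M : {set simplex * simplex}) (s : seq (simplex * simplex)) : Prop :=
  [/\ 2 <= size s, all (fun p => p \in M) s, uniq (map snd s) &
      forall i, i < size s ->
        (nth (set0, set0) s i).1 \proper (nth (set0, set0) s (i.+1 %% size s)).2].

Definition acyclic (M : {set simplex * simplex}) : Prop :=
  forall s, ~ is_cycle M s.

Definition equivariant (M : {set simplex * simplex}) : Prop :=
  forall s : {perm elt}, fixes_one s ->
    forall p, p \in M -> (act_simplex s p.1, act_simplex s p.2) \in M.

Definition critical (M : {set simplex * simplex}) (c : simplex) : bool :=
  [forall p in M, (p.1 != c) && (p.2 != c)].

Definition in_A (P : setpart) : bool :=
  proper_part P && [forall B in P, ~~ [exists i in B, is_one i] ==> (#|B| == 1)].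

Definition in_C (c : simplex) : bool :=
  [&& is_simplex c, dim c == n - 3 & [forall P in c, in_A P]].

Definition alpha : simplex :=
  [set [set [set i | is_one i]; [set i | ~~ is_one i]]].

End PartitionLattice.

(* Main.v *)
Require Import Defs.
From mathcomp Require Import all_boot fingroup perm zify.
Set Implicit Arguments. Unset Strict Implicit. Unset Printing Implicit Defensive.

Lemma imsetD1_inj (aT rT : finType) (f : aT -> rT) (A : {set aT}) x :
  injective f -> f @: (A :\ x) = f @: A :\ f x.
Proof.
move=> fi; apply/setP => y; rewrite !inE; apply/imsetP/andP => [[z]|[ne /imsetP[z zA ey]]].
  rewrite !inE => /andP[zx zA] ->; rewrite (inj_eq fi) zx; split => //; exact: imset_f.
exists z => //; rewrite !inE zA andbT; apply: contra ne => /eqP ez.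
by rewrite ey ez.
Qed.

Section Part.
Variable n : nat.
Local Notation T := 'I_n.
Local Notation SP := (setpart n).

Definition pb (P : SP) (x : T) := pblock P x.

Lemma sp_triv (P : SP) : is_setpart P -> trivIset P.
Proof. by case/and3P. Qed.
Lemma sp_cover (P : SP) : is_setpart P -> cover P = setT.
Proof. by case/and3P => /eqP. Qed.
Lemma sp_0 (P : SP) : is_setpart P -> set0 \notin P.
Proof. by case/and3P. Qed.
Lemma pb_mem (P : SP) x : is_setpart P -> x \in pb P x.
Proof. by move=> h; rewrite /pb mem_pblock sp_cover // inE. Qed.
Lemma pb_in (P : SP) x : is_setpart P -> pb P x \in P.
Proof. by move=> h; apply: pblock_mem; rewrite sp_cover // inE. Qed.
Lemma pb_same (P : SP) x y : is_setpart P -> y \in pb P x -> pb P y = pb P x.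
Proof. by move=> h; apply: same_pblock; apply: sp_triv. Qed.
Lemma pb_def (P : SP) B x : is_setpart P -> B \in P -> x \in B -> pb P x = B.
Proof. by move=> h; apply: def_pblock; apply: sp_triv. Qed.
Lemma sp_ne (P : SP) B : is_setpart P -> B \in P -> exists x, x \in B.
Proof.
move=> h BP; case: (set_0Vmem B) => [E|[x xB]]; last by exists x.
by move: (sp_0 h); rewrite -E BP.
Qed.
Lemma sp_img (P : SP) : is_setpart P -> P = [set pb P x | x : T].
Proof.
move=> h; apply/setP => B; apply/idP/imsetP => [BP|[x _ ->]]; last exact: pb_in.
by case: (sp_ne h BP) => x xB; exists x => //; rewrite (pb_def h BP xB).
Qed.
Lemma sp_ext (P Q : SP) : is_setpart P -> is_setpart Q ->
  (forall x, pb P x = pb Q x) -> P = Q.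
Proof. by move=> hP hQ e; rewrite (sp_img hP) (sp_img hQ); apply: eq_imset. Qed.

Lemma mk_sp (f : T -> {set T}) : (forall x, x \in f x) ->
  (forall x y, y \in f x -> f y = f x) ->
  is_setpart [set f x | x : T] /\ forall x, pb [set f x | x : T] x = f x.
Proof.
move=> h1 h2.
have tr : trivIset [set f x | x : T].
  apply/trivIsetP => A B /imsetP[x _ ->] /imsetP[y _ ->] ne.
  apply/pred0P => z /=; apply/negP => /andP[zx zy].
  by move: ne; rewrite -(h2 _ _ zx) -(h2 _ _ zy) eqxx.
have hp : is_setpart [set f x | x : T].
  apply/and3P; split => //.
    apply/eqP/setP => x; rewrite inE; apply/bigcupP; exists (f x) => //.
    exact: imset_f.
  apply/imsetP => [[x _ E]]; by move: (h1 x); rewrite -E inE.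
split => // x; apply: pb_def => //; exact: imset_f.
Qed.

Definition refines_pb (P Q : SP) := forall x, pb P x \subset pb Q x.

Lemma refinesP (P Q : SP) : is_setpart P -> is_setpart Q ->
  reflect (forall x, pb P x \subset pb Q x) (refines P Q).
Proof.
move=> hP hQ; apply: (iffP forall_inP) => [h x|h B BP].
  case/existsP: (h _ (pb_in x hP)) => C /andP[CQ sub].
  by rewrite (pb_def hQ CQ (subsetP sub _ (pb_mem x hP))).
case: (sp_ne hP BP) => x xB; apply/existsP; exists (pb Q x).
by rewrite pb_in //= -(pb_def hP BP xB).
Qed.


Lemma refines_refl (P : SP) : is_setpart P -> refines P P.
Proof. by move=> h; apply/refinesP. Qed.
Lemma refines_trans (P Q R : SP) : is_setpart P -> is_setpart Q -> is_setpart R ->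
  refines P Q -> refines Q R -> refines P R.
Proof.
move=> hP hQ hR /refinesP-/(_ hP hQ) a /refinesP-/(_ hQ hR) b.
apply/refinesP => // x; exact: subset_trans (a x) (b x).
Qed.
Lemma refines_anti (P Q : SP) : is_setpart P -> is_setpart Q ->
  refines P Q -> refines Q P -> P = Q.
Proof.
move=> hP hQ /refinesP-/(_ hP hQ) a /refinesP-/(_ hQ hP) b.
by apply: sp_ext => // x; apply/eqP; rewrite eqEsubset a b.
Qed.

Lemma refines_card (P Q : SP) : is_setpart P -> is_setpart Q ->
  refines P Q -> P != Q -> #|Q| < #|P|.
Proof.
move=> hP hQ /refinesP-/(_ hP hQ) r neq.
pose h (B : {set T}) := \bigcup_(x in B) pb Q x.
have hpb x : h (pb P x) = pb Q x.
  apply/eqP; rewrite eqEsubset; apply/andP; split.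
    apply/bigcupsP => y yP; rewrite (pb_same hQ (subsetP (r x) _ yP)) //.
  by apply: (bigcup_max x) => //; exact: pb_mem.
have QE : Q = h @: P.
  rewrite {1}(sp_img hQ) [in RHS](sp_img hP) -imset_comp; apply: eq_imset => x /=.
  by rewrite hpb.
have : #|Q| <= #|P| by rewrite QE leq_imset_card.
rewrite leq_eqVlt => /orP[/eqP e|//]; exfalso; move/negP: neq; apply.
have inj : {in P &, injective h} by apply/imset_injP; rewrite -QE e.
apply/eqP; apply: sp_ext => // x; apply/eqP; rewrite eqEsubset r /=.
apply/subsetP => y yQ.
have : pb P y = pb P x.
  apply: inj; rewrite ?pb_in // !hpb; exact: pb_same.
by move=> <-; exact: pb_mem.
Qed.

Lemma finest_sp : is_setpart (finest n) /\ forall x, pb (finest n) x = [set x].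
Proof. by apply: (mk_sp (f := fun x : T => [set x])) => [x|x y]; rewrite ?inE // => /eqP ->. Qed.

Lemma card_finest : #|finest n| = n.
Proof. by rewrite card_imset ?card_ord //; exact: set1_inj. Qed.

Lemma proper_sp (P : SP) : proper_part P -> is_setpart P.
Proof. by case/and3P. Qed.

End Part.

Section One.
Variable n : nat.
Local Notation T := 'I_n.
Local Notation SP := (setpart n).
Variable o : T.
Hypothesis ho : is_one o.

Lemma is_oneE i : is_one i = (i == o).
Proof. by move: ho; rewrite /is_one => /eqP h; apply/eqP/eqP => [e|->//]; apply: val_inj; rewrite /= e h. Qed.

Definition blk (P : SP) := pb P o.

Lemma coarsest_sp : is_setpart (coarsest n) /\ forall x, pb (coarsest n) x = setT.
Proof.
have [h1 h2] := @mk_sp n (fun _ : T => [set: T]) (fun x => in_setT x) (fun _ _ _ => erefl).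
have e : [set (fun _ : T => [set: T]) x | x : T] = coarsest n.
  apply/setP => B; rewrite !inE; apply/imsetP/eqP => [[x _ ->]//|->].
  by exists o.
by rewrite -e.
Qed.

Lemma card_coarsest : #|coarsest n| = 1.
Proof. by rewrite cards1. Qed.

Lemma finest_ref (P : SP) : is_setpart P -> refines (finest n) P.
Proof.
move=> h; case: (@finest_sp n) => hf ef; apply/refinesP => // x.
by rewrite ef sub1set pb_mem.
Qed.
Lemma ref_coarsest (P : SP) : is_setpart P -> refines P (coarsest n).
Proof.
move=> h; case: coarsest_sp => hf ef; apply/refinesP => // x.
by rewrite ef subsetT.
Qed.

Lemma proper_ncard (P : SP) : proper_part P -> 1 < #|P| < n.
Proof.
case/and3P => h nf nc; case: (@finest_sp n) => hf _; case: coarsest_sp => hc _.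
have a := refines_card h hc (ref_coarsest h) nc.
have b : #|P| < #|finest n| by apply: (refines_card hf h (finest_ref h)); rewrite eq_sym.
by rewrite card_coarsest in a; rewrite a /= -[X in _ < X]card_finest.
Qed.

Lemma simplex_proper (c : simplex n) P : is_simplex c -> P \in c -> proper_part P.
Proof. by case/and3P => _ /forall_inP h _; apply: h. Qed.
Lemma simplex_sp (c : simplex n) P : is_simplex c -> P \in c -> is_setpart P.
Proof. by move=> h1 h2; apply: proper_sp; apply: simplex_proper h2. Qed.
Lemma simplex_cmp (c : simplex n) P Q : is_simplex c -> P \in c -> Q \in c ->
  refines P Q || refines Q P.
Proof. by case/and3P => _ _ /forall_inP h Pc Qc; move/forall_inP: (h P Pc); apply. Qed.

Lemma chain_bound (c : simplex n) : is_simplex c -> #|c| <= n - 2.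
Proof.
move=> hc; rewrite cardE.
have -> : size (enum c) = size (map (fun P : SP => #|P|) (enum c)) by rewrite size_map.
have -> : n - 2 = size (iota 2 (n - 2)) by rewrite size_iota.
apply: uniq_leq_size.
  rewrite map_inj_in_uniq ?enum_uniq // => P Q; rewrite !mem_enum => Pc Qc e.
  have hP := simplex_sp hc Pc; have hQ := simplex_sp hc Qc.
  apply/eqP; apply/negPn/negP => ne.
  case/orP: (simplex_cmp hc Pc Qc) => r.
    by move: (refines_card hP hQ r ne); rewrite e ltnn.
  by move: (refines_card hQ hP r); rewrite eq_sym e ltnn => /(_ ne).
move=> k /mapP[P]; rewrite mem_enum => Pc ->; rewrite mem_iota.
case/andP: (proper_ncard (simplex_proper hc Pc)) => a b.
have n2 : 2 <= n by apply: leq_trans a (ltnW b).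
by rewrite a /= subnKC.
Qed.


Lemma blk_mem (P : SP) : is_setpart P -> o \in blk P.
Proof. exact: pb_mem. Qed.
Lemma blk_in (P : SP) : is_setpart P -> blk P \in P.
Proof. exact: pb_in. Qed.
Lemma blk_sub (P Q : SP) : is_setpart P -> is_setpart Q -> refines P Q ->
  blk P \subset blk Q.
Proof. by move=> hP hQ /refinesP-/(_ hP hQ); apply. Qed.
Lemma pb_blk (P : SP) x : is_setpart P -> x \in blk P -> pb P x = blk P.
Proof. exact: pb_same. Qed.
Lemma pb_nblk (P : SP) x : is_setpart P -> x \notin blk P -> o \notin pb P x.
Proof. move=> h; apply: contra => oP; by rewrite /blk (pb_same h oP) pb_mem. Qed.

Lemma blk_setT (P : SP) : is_setpart P -> blk P = setT -> P = coarsest n.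
Proof.
move=> h e; case: coarsest_sp => hc ec; apply: sp_ext => // x.
by rewrite ec pb_blk // e inE.
Qed.

Definition AB (B : {set T}) : SP := [set (if x \in B then B else [set x]) | x : T].

Lemma AB_sp (B : {set T}) : is_setpart (AB B) /\ forall x, pb (AB B) x = (if x \in B then B else [set x]).
Proof.
apply: (@mk_sp n (fun x => if x \in B then B else [set x])) => [x|x y].
  by case: ifP => //; rewrite inE.
by case: ifP => xB; [move=> ->|rewrite inE => /eqP ->; rewrite xB].
Qed.
Lemma AB_is (B : {set T}) : is_setpart (AB B). Proof. by case: (AB_sp B). Qed.
Lemma pb_AB (B : {set T}) x : pb (AB B) x = (if x \in B then B else [set x]). Proof. by case: (AB_sp B). Qed.

Lemma AB_blk (B : {set T}) : o \in B -> blk (AB B) = B.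
Proof. by move=> oB; rewrite /blk pb_AB oB. Qed.

Lemma refines_AB (B : {set T}) (Q : SP) : o \in B -> is_setpart Q ->
  refines (AB B) Q = (B \subset blk Q).
Proof.
move=> oB hQ; apply/idP/idP => [r|s].
  by rewrite -{1}(AB_blk oB); apply: blk_sub => //; exact: AB_is.
apply/refinesP => //; first exact: AB_is.
move=> x; rewrite pb_AB; case: ifP => xB.
  by rewrite pb_blk // (subsetP s).
by rewrite sub1set pb_mem.
Qed.

Lemma AB_eq (Q : SP) (B : {set T}) : is_setpart Q -> refines Q (AB B) -> blk Q = B -> Q = AB B.
Proof.
move=> hQ /refinesP-/(_ hQ (AB_is B)) r e; apply: sp_ext => //; first exact: AB_is.
move=> x; move: (r x); rewrite pb_AB; case: ifP => xB.
  by rewrite pb_blk // e.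
move=> s; apply/eqP; rewrite eqEsubset s sub1set pb_mem //.
Qed.

Lemma finest_AB : finest n = AB [set o].
Proof.
case: (@finest_sp n) => hf ef; apply: sp_ext => //; first exact: AB_is.
by move=> x; rewrite ef pb_AB inE; case: eqP => // ->.
Qed.

Lemma inA_E (Q : SP) : in_A Q = proper_part Q && (Q == AB (blk Q)).
Proof.
rewrite /in_A; case hp: (proper_part Q) => //=; have hQ := proper_sp hp.
apply/forall_inP/eqP => [h|e B BQ].
  apply: sp_ext => //; first exact: AB_is.
  move=> x; rewrite pb_AB; case: ifP => xB; first by rewrite pb_blk.
  have nex : ~~ [exists i in pb Q x, is_one i].
    apply/existsP => [[i /andP[iP]]]; rewrite is_oneE => /eqP ei.
    by move: (pb_nblk hQ (negbT xB)); rewrite -ei iP.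
  move: (h _ (pb_in x hQ)) => /implyP /(_ nex) /cards1P [y ey].
  by move: (pb_mem x hQ); rewrite ey inE => /eqP <-.
move: BQ; rewrite e => /imsetP[x _ ->]; apply/implyP.
case: ifP => xB; last by rewrite cards1.
move=> /existsP []; exists o.
by rewrite blk_mem // is_oneE eqxx.
Qed.


Definition splitf (B : {set T}) (P : SP) (x : T) :=
  if x \in B then B else if x \in blk P then blk P :\: B else pb P x.
Definition split (B : {set T}) (P : SP) : SP := [set splitf B P x | x : T].

Lemma split_sp0 (B : {set T}) (P : SP) : is_setpart P -> B \subset blk P ->
  is_setpart (split B P) /\ forall x, pb (split B P) x = splitf B P x.
Proof.
move=> hP sB; apply: mk_sp => [x|x y]; rewrite /splitf.
  case: ifP => // xB; case: ifP => xP; [by rewrite inE xB xP | exact: pb_mem].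
case: ifP => xB; first by move=> ->.
case: ifP => xP.
  by rewrite inE => /andP[/negbTE -> ->].
move=> yx; have yP : y \notin blk P.
  apply/negP => yP; have e1 := pb_same hP yx; rewrite pb_blk // in e1.
  by move: (pb_mem x hP); rewrite -e1 xP.
have yB : y \notin B by apply: contra yP; exact: (subsetP sB).
by rewrite (negbTE yB) (negbTE yP) (pb_same hP yx).
Qed.
Lemma split_is (B : {set T}) (P : SP) : is_setpart P -> B \subset blk P -> is_setpart (split B P).
Proof. by move=> h s; case: (split_sp0 h s). Qed.
Lemma pb_split (B : {set T}) (P : SP) x : is_setpart P -> B \subset blk P ->
  pb (split B P) x = splitf B P x.
Proof. by move=> h s; case: (split_sp0 h s). Qed.

Lemma split_blk (B : {set T}) (P : SP) : is_setpart P -> B \subset blk P -> o \in B ->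
  blk (split B P) = B.
Proof. by move=> h s oB; rewrite /blk pb_split // /splitf oB. Qed.

Lemma split_ref (B : {set T}) (P : SP) : is_setpart P -> B \subset blk P -> refines (split B P) P.
Proof.
move=> h s; apply/refinesP => //; first exact: split_is.
move=> x; rewrite pb_split // /splitf; case: ifP => xB.
  by rewrite pb_blk // (subsetP s).
case: ifP => xP //; by rewrite pb_blk // subsetDl.
Qed.

Lemma AB_split (B : {set T}) (P : SP) : is_setpart P -> B \subset blk P -> o \in B ->
  refines (AB B) (split B P).
Proof. by move=> h s oB; rewrite refines_AB // ?split_blk // split_is. Qed.

Lemma ref_split (B : {set T}) (P Q : SP) : is_setpart P -> B \subset blk P -> is_setpart Q ->
  blk Q = B -> refines Q P -> refines Q (split B P).
Proof.
move=> hP s hQ e /refinesP-/(_ hQ hP) r; apply/refinesP => //; first exact: split_is.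
move=> x; rewrite pb_split // /splitf; case: ifP => xB.
  by rewrite pb_blk // e.
case: ifP => xP; last exact: r.
apply/subsetP => y yx; rewrite inE.
have := subsetP (r x) _ yx; rewrite pb_blk // => ->; rewrite andbT.
apply/negP => yB; have e1 := pb_same hQ yx; rewrite pb_blk ?e // in e1.
by move: (pb_mem x hQ); rewrite -e1 xB.
Qed.

Lemma split_AB (B : {set T}) (P : SP) : is_setpart P -> B \proper blk P -> o \in B ->
  split B P = AB B -> P = AB (blk P) /\ #|blk P| = #|B|.+1.
Proof.
move=> hP pr oB e; have s := proper_sub pr.
split.
  apply: sp_ext => //; first exact: AB_is.
  move=> x; rewrite pb_AB; case: ifP => xP; first by rewrite pb_blk.
  have := pb_split x hP s; rewrite e pb_AB /splitf xP.
  have xB : x \notin B by apply: contra (negbT xP); exact: (subsetP s).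
  by rewrite (negbTE xB).
case/properP: pr => _ [y yP yB].
have := pb_split y hP s; rewrite e pb_AB /splitf (negbTE yB) yP => E.
rewrite -(cardsID B (blk P)) -E cards1 addn1; congr _.+1.
by rewrite (setIidPr s).
Qed.

Lemma split_proper (B : {set T}) (P : SP) : is_setpart P -> B \subset blk P -> o \in B ->
  B != setT -> split B P != AB B -> proper_part (split B P).
Proof.
move=> hP s oB nT ne; apply/and3P; split; first exact: split_is.
  rewrite finest_AB; apply: contra ne => /eqP e.
  have : blk (split B P) = blk (AB [set o]) by rewrite e.
  rewrite split_blk // AB_blk ?inE // => eB.
  by rewrite e eB.
apply/eqP => e; have : blk (split B P) = setT.
  by rewrite e /blk; case: coarsest_sp => _ ->.
by rewrite split_blk // => eB; move: nT; rewrite eB eqxx.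
Qed.


Definition ch (c : simplex n) :=
  [forall P in c, proper_part P] && [forall P in c, forall Q in c, refines P Q || refines Q P].

Lemma ch_simplex (c : simplex n) : is_simplex c -> ch c.
Proof. by case/and3P => _ a b; apply/andP. Qed.
Lemma ch_proper (c : simplex n) P : ch c -> P \in c -> proper_part P.
Proof. by case/andP => /forall_inP h _; apply: h. Qed.
Lemma ch_sp (c : simplex n) P : ch c -> P \in c -> is_setpart P.
Proof. by move=> h1 h2; apply: proper_sp; apply: ch_proper h2. Qed.
Lemma ch_cmp (c : simplex n) P Q : ch c -> P \in c -> Q \in c ->
  refines P Q || refines Q P.
Proof. by case/andP => _ /forall_inP h Pc Qc; move/forall_inP: (h P Pc); apply. Qed.
Lemma ch_sub (c c' : simplex n) : ch c -> c' \subset c -> ch c'.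
Proof.
move=> h /subsetP s; apply/andP; split; apply/forall_inP => P Pc.
  by apply: ch_proper h _; apply: s.
by apply/forall_inP => Q Qc; apply: ch_cmp h _ _; apply: s.
Qed.
Lemma ch_add (c : simplex n) t : ch c -> proper_part t ->
  (forall Q, Q \in c -> refines Q t || refines t Q) -> ch (t |: c).
Proof.
move=> h pt ct; apply/andP; split; apply/forall_inP => P.
  by case/setU1P => [->//|]; apply: ch_proper.
have ht := proper_sp pt.
case/setU1P => [->|Pc]; apply/forall_inP => Q; case/setU1P => [->|Qc].
all: try by rewrite refines_refl.
all: try by rewrite orbC; apply: ct.
all: try by apply: ct.
exact: ch_cmp h Pc Qc.
Qed.

Definition U (B : {set T}) (c : simplex n) := [set Q in c | B \proper blk Q].
Definition pstar (B : {set T}) (c : simplex n) : SP :=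
  odflt (coarsest n) [pick Q in U B c | [forall R in U B c, refines Q R]].

Lemma U_sub (B : {set T}) (c : simplex n) : U B c \subset c.
Proof. by apply/subsetP => Q; rewrite inE => /andP[]. Qed.

Lemma pstar_spec (B : {set T}) (c : simplex n) : ch c ->
  (U B c = set0 /\ pstar B c = coarsest n) \/
  (pstar B c \in U B c /\ forall R, R \in U B c -> refines (pstar B c) R).
Proof.
move=> hc; rewrite /pstar; case: pickP => [Q /andP[QU /forall_inP h]|none].
  by right; split.
left; split => //; apply/eqP/set0Pn => [[R0 R0U]].
have sU := subsetP (U_sub B c).
case: (arg_maxnP (fun Q : SP => #|Q|) R0U) => Q QU mx.
have {}QU : Q \in U B c := QU.
have {}mx : forall j, j \in U B c -> #|j| <= #|Q| := mx.
move: (none Q) => /= /negbT; rewrite QU /= => /negP; apply; apply/forall_inP => R RU.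
case/orP: (ch_cmp hc (sU _ QU) (sU _ RU)) => // r.
case: (eqVneq R Q) => [->|ne]; first by apply: refines_refl; apply: ch_sp hc (sU _ QU).
have := refines_card (ch_sp hc (sU _ RU)) (ch_sp hc (sU _ QU)) r ne.
by rewrite ltnNge mx.
Qed.

Lemma pstar_eq (B : {set T}) (c : simplex n) P : ch c -> P \in U B c ->
  (forall R, R \in U B c -> refines P R) -> pstar B c = P.
Proof.
move=> hc PU h; have sU := subsetP (U_sub B c).
case: (pstar_spec B hc) => [[E _]|[pU pm]]; first by move: PU; rewrite E inE.
apply: refines_anti; [exact: ch_sp hc (sU _ pU)|exact: ch_sp hc (sU _ PU)| |]; auto.
Qed.

Lemma pstar_sp (B : {set T}) (c : simplex n) : ch c -> is_setpart (pstar B c).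
Proof.
move=> hc; case: (pstar_spec B hc) => [[_ ->]|[pU _]]; first by case: coarsest_sp.
by apply: ch_sp hc _; apply: (subsetP (U_sub B c)).
Qed.

Lemma pstar_blk (B : {set T}) (c : simplex n) : ch c -> B != setT -> B \proper blk (pstar B c).
Proof.
move=> hc nT; case: (pstar_spec B hc) => [[_ ->]|[pU _]].
  rewrite /blk; case: coarsest_sp => _ ->; rewrite properEneq nT subsetT //.
by move: pU; rewrite inE => /andP[].
Qed.

Definition good (B : {set T}) (c : simplex n) :=
  o \in B /\ (B = [set o] \/ B = setT \/ AB B \in c).

Lemma good_sub (B : {set T}) (c c' : simplex n) : good B c -> c \subset c' -> good B c'.
Proof.
move=> [oB [E|[E|Ac]]] s; split => //; [by left|by right;left|].
by right; right; apply: (subsetP s).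
Qed.

Lemma good_low (B : {set T}) (c : simplex n) (Q : SP) : ch c -> good B c -> Q \in c -> ~~ (B \subset blk Q) ->
  refines Q (AB B).
Proof.
move=> hc [oB [E|[E|Ac]]] Qc ns.
- by move: ns; rewrite E sub1set blk_mem // (ch_sp hc Qc).
- have -> : AB B = coarsest n.
    rewrite E; case: coarsest_sp => hc' ec; apply: sp_ext => //; first exact: AB_is.
    by move=> x; rewrite pb_AB inE ec.
  by apply: ref_coarsest; apply: ch_sp hc Qc.
- case/orP: (ch_cmp hc Ac Qc) => // r.
  by move: ns; rewrite -refines_AB // ?r // (ch_sp hc Qc).
Qed.

Lemma out_props (B : {set T}) (c : simplex n) : ch c -> good B c -> B != setT ->
  let t := split B (pstar B c) in t != AB B ->
  [/\ proper_part t, forall Q, Q \in c -> refines Q t || refines t Q,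
      blk t = B & ~~ in_A t].
Proof.
move=> hc g nT t ne; case: (g) => oB _.
set P := pstar B c; have hP : is_setpart P by apply: pstar_sp.
have pr := pstar_blk hc nT; have s := proper_sub pr.
have ht : is_setpart t by apply: split_is.
have bt : blk t = B by apply: split_blk.
split => //.
- exact: split_proper.
- move=> Q Qc; have hQ := ch_sp hc Qc.
  case sB : (B \subset blk Q); last first.
    apply/orP; left; apply: refines_trans (good_low hc g Qc (negbT sB)) _ => //.
      exact: AB_is.
    exact: AB_split.
  case: (eqVneq (blk Q) B) => [eB|neB].
    apply/orP; left; apply: ref_split => //.
    case: (pstar_spec B hc) => [[_ ->]|[pU pm]]; first exact: ref_coarsest.
    have Pc : P \in c by apply: (subsetP (U_sub B c)).
    case/orP: (ch_cmp hc Qc Pc) => // r.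
    have := blk_sub hP hQ r; rewrite eB => s'.
    by move: pr; rewrite properE -/P s' andbF.
  have QU : Q \in U B c by rewrite inE Qc properEneq eq_sym neB sB.
  case: (pstar_spec B hc) => [[E _]|[pU pm]]; first by move: QU; rewrite E inE.
  apply/orP; right; apply: refines_trans (split_ref hP s) (pm _ QU) => //.
- rewrite inA_E; apply/negP => /andP[_ /eqP e]; move: ne; by rewrite [X in X != _]e bt eqxx.
Qed.


Fixpoint lvl (k : nat) (B : {set T}) (c : simplex n) : option ({set T} * SP) :=
  if k is k'.+1 then
    if B == setT then None else
    if split B (pstar B c) != AB B then Some (B, split B (pstar B c))
    else lvl k' (blk (pstar B c)) c
  else None.

Lemma step_good (B : {set T}) (c : simplex n) : ch c -> good B c -> B != setT ->
  split B (pstar B c) = AB B ->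
  [/\ good (blk (pstar B c)) c, #|blk (pstar B c)| = #|B|.+1,
      B \proper blk (pstar B c) &
      pstar B c = coarsest n \/ (pstar B c \in U B c /\ pstar B c = AB (blk (pstar B c)))].
Proof.
move=> hc [oB gB] nT e.
have hP := pstar_sp B hc; have pr := pstar_blk hc nT.
have [eP ecard] := split_AB hP pr oB e.
split => //.
- split; first by apply: (subsetP (proper_sub pr)).
  case: (pstar_spec B hc) => [[_ ->]|[pU _]].
    by right; left; rewrite /blk; case: coarsest_sp => _ ->.
  by right; right; rewrite -eP; apply: (subsetP (U_sub B c)).
- case: (pstar_spec B hc) => [[_ ->]|[pU _]]; [by left|by right].
Qed.

Lemma lvl_some k (B : {set T}) (c : simplex n) Bf t : ch c -> good B c ->
  lvl k B c = Some (Bf, t) ->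
  [/\ good Bf c, B \subset Bf, Bf != setT, t = split Bf (pstar Bf c) & t != AB Bf].
Proof.
elim: k B => [//|k IH] B hc g /=.
case: eqP => // /eqP nT.
case: ifP => [ne [<- <-] | /negbFE /eqP e rec]; first by split.
have [g' _ pr _] := step_good hc g nT e.
have [? s ? ? ?] := IH _ hc g' rec; split => //.
exact: subset_trans (proper_sub pr) s.
Qed.

Lemma lvl_none k (B : {set T}) (c : simplex n) : ch c -> good B c -> n < #|B| + k ->
  lvl k B c = None ->
  n.-1 - #|B| <= #|[set Q in c | in_A Q & B \proper blk Q]|.
Proof.
elim: k B => [|k IH] B hc g.
  by rewrite addn0 => h; move: (max_card B); rewrite card_ord leqNgt h.
move=> fu /=; case: eqP => [-> _|/eqP nT].
  by rewrite cardsT card_ord; have -> : n.-1 - n = 0 by apply/eqP; rewrite subn_eq0 leq_pred.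
case: ifP => // /negbFE /eqP e rec.
have [g' ec pr Pc] := step_good hc g nT e.
have := IH _ hc g'; rewrite ec addSnnS => /(_ fu rec) ih.
case: Pc => [Pco|[PU PA]].
  move: ec; rewrite Pco /blk; case: coarsest_sp => _ ->; rewrite cardsT card_ord => ec.
  have -> : n.-1 - #|B| = 0 by lia.
  done.
set P := pstar B c in PU PA pr ih *.
have Pc : P \in c by apply: (subsetP (U_sub B c)).
set S' := [set Q in c | in_A Q & blk P \proper blk Q] in ih.
set S := [set Q in c | in_A Q & B \proper blk Q].
have sub : P |: S' \subset S.
  apply/subsetP => Q; case/setU1P => [->|].
    rewrite inE Pc pr inA_E andbT -PA eqxx andbT.
    by apply: ch_proper hc Pc.
  rewrite !inE => /and3P[-> -> pr2] /=.
  exact: proper_trans pr pr2.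
have nin : P \notin S' by rewrite !inE properE subxx /= !andbF.
have := subset_leq_card sub; rewrite cardsU1 nin add1n => h.
move: ih h; move: (#|S'|) (#|S|) (#|B|) => a b d; lia.
Qed.


Lemma lvl_inv k (B : {set T}) (c c' : simplex n) Bf t : ch c -> ch c' -> good B c -> good B c' ->
  lvl k B c = Some (Bf, t) -> (c' = t |: c \/ c' = c :\ t) -> lvl k B c' = Some (Bf, t).
Proof.
move=> hc hc' g g' E ec'.
have [gf sBf nTf tdef tne] := lvl_some hc g E.
have tne' : split Bf (pstar Bf c) != AB Bf by rewrite -tdef.
have [pt ct bt nAt] := out_props hc gf nTf tne'.
rewrite -tdef in pt ct bt nAt.
have inc' : forall Q, Q \in c' -> Q = t \/ Q \in c.
  by move=> Q; case: ec' => ->; rewrite !inE; [case/orP => [/eqP|]|case/andP => _]; auto.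
have inc : forall Q, Q \in c -> Q != t -> Q \in c'.
  by move=> Q Qc ne; case: ec' => ->; rewrite !inE Qc ?orbT ?ne.
elim: k B g g' E sBf => [//|k IH] B g g' /= E sBf.
move: E; case: eqP => // /eqP nT.
case: ifP => [ne [eB et] | /negbFE /eqP e rec].
- have UE : U B c' = U B c.
    apply/setP => Q; rewrite !inE; apply/andP/andP => [[Qc pr]|[Qc pr]].
      case: (inc' _ Qc) => [eQ|//]; first by move: pr; rewrite eQ bt -eB properE subxx andbF.
    split => //; apply: inc => //; apply/eqP => eQ; move: pr.
    by rewrite eQ bt -eB properE subxx andbF.
  have pe : pstar B c' = pstar B c by rewrite /pstar UE.
  by rewrite pe ne /= et eB.
have [g1 _ pr Pc] := step_good hc g nT e.
have [_ sB1 _ _ _] := lvl_some hc g1 rec.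
set P := pstar B c in g1 pr Pc sB1 rec e.
case: Pc => [Pco|[PU PA]].
  exfalso; move/negP: nTf; apply; rewrite eqEsubset subsetT /=.
  apply: subset_trans _ sB1; rewrite Pco /blk; by case: coarsest_sp => _ ->.
have Pc : P \in c by apply: (subsetP (U_sub B c)).
have hP : is_setpart P by apply: ch_sp hc Pc.
have Pnt : P != t.
  apply/eqP => ePt; move: nAt; rewrite -ePt inA_E (ch_proper hc Pc) /= -PA eqxx //.
have eq' : pstar B c' = P.
  apply: pstar_eq => //.
    move: PU; rewrite !inE => /andP[_ ->]; rewrite andbT; exact: inc.
  move=> R; rewrite inE => /andP[Rc' prR]; case: (inc' _ Rc') => [->|Rc].
    rewrite PA refines_AB //; first by rewrite bt.
      by apply: blk_mem.
    exact: proper_sp.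
  case: (pstar_spec B hc) => [[E0 _]|[_ pm]]; first by move: PU; rewrite E0 inE.
  by apply: pm; rewrite inE Rc prR.
rewrite eq' e eqxx /=.
have e' : split B (pstar B c') = AB B by rewrite eq'.
have [g1' _ _ _] := step_good hc' g' nT e'.
rewrite eq' in g1'.
exact: IH.
Qed.


Lemma U_subS (B : {set T}) (a a' : simplex n) : a \subset a' -> U B a \subset U B a'.
Proof.
move=> s; apply/subsetP => Q; rewrite !inE => /andP[Qa ->]; by rewrite (subsetP s).
Qed.

Lemma lvl_cmp k (B : {set T}) (a a' : simplex n) Bf t Bf' t' : ch a' -> a \subset a' ->
  good B a -> lvl k B a = Some (Bf, t) -> lvl k B a' = Some (Bf', t') ->
  Bf \proper Bf' \/ (Bf' = Bf /\ (t' = t \/ #|U Bf a| < #|U Bf a'|)).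
Proof.
move=> ha' s; have ha := ch_sub ha' s.
elim: k B => [//|k IH] B g /=.
case: eqP => // /eqP nT.
have g' := good_sub g s.
have sU := U_subS B s.
case: (eqVneq (pstar B a') (pstar B a)) => [eP|neP].
  rewrite eP; case: ifP => [ne [<- <-] [<- <-] | /negbFE /eqP e ra ra'].
    by right; split => //; left.
  have [g1 _ _ _] := step_good ha g nT e.
  exact: IH ra ra'.
case: ifP => [ne [eB et] | /negbFE /eqP e ra].
- have P'U : pstar B a' \in U B a' /\ pstar B a' \notin U B a.
    case: (pstar_spec B ha') => [[E1 E2]|[p'U pm']].
      case: (pstar_spec B ha) => [[_ E3]|[pU _]]; first by move: neP; rewrite E2 E3 eqxx.
      by move: (subsetP sU _ pU); rewrite E1 inE.
    split => //; apply/negP => p'Ua.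
    case: (pstar_spec B ha) => [[E3 _]|[pU pm]]; first by move: p'Ua; rewrite E3 inE.
    move: neP; rewrite (refines_anti (ch_sp ha' (subsetP (U_sub _ _) _ p'U))
       (ch_sp ha (subsetP (U_sub _ _) _ pU)) (pm' _ (subsetP sU _ pU)) (pm _ p'Ua)) eqxx //.
  case: P'U => p'U p'nU.
  case: ifP => [ne' [<- <-] | /negbFE /eqP e' ra'].
    right; split => //; right; rewrite -eB; apply: proper_card.
    by rewrite properE sU /=; apply/subsetPn; exists (pstar B a').
  have [g1' _ _ _] := step_good ha' g' nT e'.
  have [_ sB1 _ _ _] := lvl_some ha' g1' ra'.
  left; rewrite -eB; apply: proper_sub_trans sB1.
  by move: p'U; rewrite inE => /andP[].
- exfalso.
  have [g1 ec pr Pc] := step_good ha g nT e.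
  have [_ sB1 nTf _ _] := lvl_some ha g1 ra.
  case: Pc => [Pco|[PU PA]].
    move/negP: nTf; apply; rewrite eqEsubset subsetT /=.
    apply: subset_trans _ sB1; rewrite Pco /blk; by case: coarsest_sp => _ ->.
  case: (pstar_spec B ha') => [[E1 _]|[p'U pm']].
    by move: (subsetP sU _ PU); rewrite E1 inE.
  have r := pm' _ (subsetP sU _ PU).
  have hP' := ch_sp ha' (subsetP (U_sub _ _) _ p'U).
  have hP := ch_sp ha (subsetP (U_sub _ _) _ PU).
  have sb := blk_sub hP' hP r.
  have pr' : B \proper blk (pstar B a') by move: p'U; rewrite inE => /andP[].
  have eb : blk (pstar B a') = blk (pstar B a).
    apply/eqP; rewrite eqEcard sb ec /=; exact: proper_card pr'.
  move/eqP: neP; apply; rewrite PA; apply: AB_eq => //.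
  by rewrite -PA.
Qed.


Hypothesis hn3 : 2 < n.
Let hn2 : 1 < n := ltnW hn3.

Definition alphaP : SP := [set [set i | is_one i]; [set i | ~~ is_one i]].

Lemma alphaE : alpha n = [set alphaP].
Proof. by []. Qed.

Lemma alpha_split : split [set o] (coarsest n) = alphaP.
Proof.
have bc : blk (coarsest n) = setT by rewrite /blk; case: coarsest_sp => _ ->.
have e1 : [set i | is_one i] = [set o] by apply/setP => i; rewrite !inE is_oneE.
have e2 : [set i | ~~ is_one i] = setT :\: [set o] by apply/setP => i; rewrite !inE is_oneE andbT.
rewrite /alphaP e1 e2 /split /splitf bc; apply/setP => X; rewrite !inE.
apply/imsetP/orP => [[x _ ->]|[/eqP->|/eqP->]].
- by rewrite inE; case: ifP => _; [left|right; rewrite inE].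

- by exists o; rewrite ?inE ?eqxx.
- pose x1 : T := Ordinal hn2; exists x1 => //.
  have : x1 != o by apply/eqP => e; move: ho; rewrite /is_one -e.
  by rewrite inE => /negbTE ->; rewrite inE.
Qed.

Lemma alpha_proper : proper_part alphaP.
Proof.
rewrite -alpha_split.
have hc : is_setpart (coarsest n) by case: coarsest_sp.
have bc : blk (coarsest n) = setT by rewrite /blk; case: coarsest_sp => _ ->.
have nT : [set o] != [set: T].
  apply/eqP => e; pose x1 : T := Ordinal hn2.
  have : x1 \in [set o] by rewrite e inE.
  by rewrite inE => /eqP ex; move: ho; rewrite /is_one -ex.
apply: split_proper => //; rewrite ?inE ?bc ?subsetT //.
apply/negP => /eqP e.
have : pb (split [set o] (coarsest n)) (Ordinal hn2) = pb (AB [set o]) (Ordinal hn2) by rewrite e.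
rewrite pb_split ?bc ?subsetT // pb_AB /splitf bc !inE.
have -> : (Ordinal hn2 == o) = false.
  by apply/negbTE/eqP => ex; move: ho; rewrite /is_one -ex.
move=> /setP /(_ (Ordinal hn3)); rewrite !inE /=.
have -> : (Ordinal hn3 == o) = false.
  by apply/negbTE/eqP => ex; move: ho; rewrite /is_one -ex.
by [].
Qed.

Definition tog (c : simplex n) := lvl n [set o] c.

Lemma good0 c : good [set o] c.
Proof. by split; [rewrite inE | left]. Qed.

Lemma tog_props c Bf t : ch c -> tog c = Some (Bf, t) ->
  [/\ proper_part t, forall Q, Q \in c -> refines Q t || refines t Q,
      blk t = Bf, ~~ in_A t & good Bf c /\ Bf != setT /\ t != AB Bf].
Proof.
move=> hc E; have [gf _ nTf tdef tne] := lvl_some hc (good0 c) E.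
have tne' : split Bf (pstar Bf c) != AB Bf by rewrite -tdef.
have [pt ct bt nAt] := out_props hc gf nTf tne'.
by rewrite -tdef in pt ct bt nAt.
Qed.

Lemma tog_inv c c' Bf t : ch c -> ch c' -> tog c = Some (Bf, t) ->
  (c' = t |: c \/ c' = c :\ t) -> tog c' = Some (Bf, t).
Proof. by move=> hc hc' E ec; apply: (lvl_inv hc hc' (good0 c) (good0 c') E ec). Qed.

Lemma ch_addt c Bf t : ch c -> tog c = Some (Bf, t) -> ch (t |: c).
Proof. by move=> hc E; have [pt ct _ _ _] := tog_props hc E; apply: ch_add. Qed.

Lemma simplex_of c : c != set0 -> ch c -> is_simplex c.
Proof. by move=> ne /andP[a b]; apply/and3P. Qed.

Definition Mset : {set simplex n * simplex n} :=
  [set p | [&& is_simplex p.2, p.1 != set0 &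
     if tog p.2 is Some (_, t) then (t \in p.2) && (p.1 == p.2 :\ t) else false]].

Lemma MsetP p : p \in Mset ->
  exists Bf t, [/\ is_simplex p.2, p.1 != set0, tog p.2 = Some (Bf, t), t \in p.2 &
                  p.1 = p.2 :\ t].
Proof.
rewrite inE => /and3P[s ne]; case E: (tog p.2) => [[Bf t]|//] /andP[tin /eqP e].
by exists Bf, t; split.
Qed.

Lemma Mset_bot p : p \in Mset -> exists Bf t, [/\ tog p.1 = Some (Bf, t), t \notin p.1 &
   tog p.2 = Some (Bf, t)].
Proof.
case/MsetP => Bf [t [s ne E tin e]]; exists Bf, t; split => //.
- apply: tog_inv E _; [exact: ch_simplex|rewrite e; apply: ch_sub (ch_simplex s) _; exact: subD1set|by right].
- by rewrite e !inE eqxx.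
Qed.


Lemma Mset_bot' p Bf t : p \in Mset -> tog p.2 = Some (Bf, t) ->
  tog p.1 = Some (Bf, t) /\ t \notin p.1 /\ t \in p.2 /\ p.1 = p.2 :\ t.
Proof.
move=> pM E; case/MsetP: (pM) => Bf' [t' [s ne E' tin e]].
move: E'; rewrite E => -[eB et]; rewrite -et in tin e.
split; last by rewrite e !inE eqxx.
apply: tog_inv E _; [exact: ch_simplex|rewrite e; apply: ch_sub (ch_simplex s) _; exact: subD1set|by right].
Qed.

Lemma M_match : is_matching Mset.
Proof.
apply/andP; split.
  apply/forall_inP => p pM; case/MsetP: (pM) => Bf [t [s ne E tin e]].
  apply/and3P; split => //.
    rewrite e; apply: simplex_of; first by rewrite -e.
    apply: ch_sub (ch_simplex s) (subD1set _ _).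
  by rewrite /covers e properD1 //= [in X in X == _](cardsD1 t) tin.
apply/forall_inP => p pM; apply/forall_inP => q qM.
case/MsetP: (pM) => Bp [tp [sp nep Ep tpin ep]].
case/MsetP: (qM) => Bq [tq [sq neq Eq tqin eq]].
have [E1p [ntp _]] := Mset_bot' pM Ep.
have [E1q [ntq _]] := Mset_bot' qM Eq.
apply/and4P; split.
- apply/implyP => /eqP e1; move: E1q; rewrite -e1 E1p => -[eB et].
  have e2 : p.2 = q.2 by rewrite -(setD1K tpin) -(setD1K tqin) -ep -eq e1 et.
  by apply/eqP; rewrite [p]surjective_pairing [q]surjective_pairing e1 e2.
- apply/implyP => /eqP e2; move: Eq; rewrite -e2 Ep => -[eB et].
  have e1 : p.1 = q.1 by rewrite ep eq e2 et.
  by apply/eqP; rewrite [p]surjective_pairing [q]surjective_pairing e1 e2.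
- apply/eqP => e1; move: Eq; rewrite -e1 E1p => -[_ et].
  by move: ntp; rewrite et e1 tqin.
- apply/eqP => e1; move: E1q; rewrite -e1 Ep => -[_ et].
  by move: ntq; rewrite -et -e1 tpin.
Qed.


Lemma L2 x y c k : x < y -> c < k -> x * k + c < y * k.
Proof.
move=> xy ck; apply: leq_trans (_ : x.+1 * k <= y * k); last by rewrite leq_mul2r xy orbT.
by rewrite mulSn [k + _]addnC ltn_add2l.
Qed.
Lemma lexK e f b b' c c' k : b < k -> c < k ->
  (e < f \/ (e = f /\ (b < b' \/ (b <= b' /\ c < c')))) ->
  (e * k + b) * k + c < (f * k + b') * k + c'.
Proof.
move=> bk ck [ef|[-> [bb|[bb cc]]]].
- apply: leq_trans (_ : (f * k + b') * k <= _); last exact: leq_addr.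
  apply: L2 => //; apply: leq_trans (_ : f * k <= _); last exact: leq_addr.
  exact: L2.
- apply: leq_trans (_ : (f * k + b') * k <= _); last exact: leq_addr.
  by apply: L2 => //; rewrite ltn_add2l.
- by rewrite -addnS; apply: leq_add => //; rewrite leq_mul2r leq_add2l bb orbT.
Qed.

Definition Kb := #|[set: SP]|.+1.
Lemma small (X : {set SP}) : #|X| < Kb.
Proof. by rewrite ltnS; apply: subset_leq_card; apply: subsetT. Qed.

Definition phi (c : simplex n) :=
  if tog c is Some (Bf, _) then (#|Bf| * Kb + #|U Bf c|) * Kb + #|c| else 0.

Lemma U_D1 (B : {set T}) (c : simplex n) t : blk t = B -> U B (c :\ t) = U B c.
Proof.
move=> bt; apply/setP => Q; rewrite !inE; case: (eqVneq Q t) => [->|//].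
by rewrite bt properE subxx !andbF.
Qed.

Lemma phi_step p q : p \in Mset -> q \in Mset -> p.1 \proper q.2 -> p.2 != q.2 ->
  phi p.2 < phi q.2.
Proof.
move=> pM qM pr ne.
case/MsetP: (pM) => B [t [sp nep Ep tin ep]].
case/MsetP: (qM) => B' [t' [sq neq Eq t'in eq]].
have [E1 [nt _]] := Mset_bot' pM Ep.
have [_ _ bt _ _] := tog_props (ch_simplex sp) Ep.
have UE : U B p.1 = U B p.2 by rewrite ep U_D1.
have cmp := lvl_cmp (ch_simplex sq) (proper_sub pr) (good0 _) E1 Eq.
rewrite /phi Ep Eq.
have h1 := small (U B p.2); have h2 := small (U B' q.2).
have h3 := small p.2; have h4 := small q.2.
apply: lexK => //.
case: cmp => [prB|[eB [et|ltU]]].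
- by left; apply: fintype.proper_card.
- right; rewrite eB; split => //; right.
  have sU : U B p.2 \subset U B q.2.
    by rewrite -UE; apply: U_subS; apply: proper_sub.
  have s2 : p.2 \proper q.2.
    rewrite properEneq ne /= -(setD1K tin) -ep; apply/subsetP => Q; case/setU1P => [->|].
      by rewrite -et.
    by apply: (subsetP (proper_sub pr)).
  by split; [apply: subset_leq_card | apply: fintype.proper_card].
- by right; rewrite eB; split => //; left; rewrite -UE.
Qed.


Lemma M_acyclic : acyclic Mset.
Proof.
move=> s [sz allin un cyc].
set N := size s in sz cyc.
pose x0 : simplex n * simplex n := (set0, set0).
have N0 : 0 < N by apply: leq_trans sz.
have inM i : i < N -> nth x0 s i \in Mset by move=> hi; apply: (all_nthP x0 allin).
have neq i : i < N -> (nth x0 s i).2 != (nth x0 s (i.+1 %% N)).2.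
  move=> hi; have hj : i.+1 %% N < N by rewrite ltn_pmod.
  rewrite -!(nth_map x0 set0 snd) // nth_uniq ?size_map //.
  case: (ltnP i.+1 N) => h; first by rewrite modn_small // neq_ltn ltnSn.
  have eN : i.+1 = N by apply/eqP; rewrite eqn_leq h hi.
  rewrite eN modnn; apply/eqP => i0; move: eN sz; rewrite i0 => <-.
  by [].
have step i : i < N -> phi (nth x0 s i).2 < phi (nth x0 s (i.+1 %% N)).2.
  move=> hi; apply: phi_step; [exact: inM|apply: inM; rewrite ltn_pmod //|exact: cyc|exact: neq].
have mono j : j < N -> phi (nth x0 s 0).2 + j <= phi (nth x0 s j).2.
  elim: j => [|j IH] hj; first by rewrite addn0.
  have := step j (ltnW hj); rewrite modn_small // => h.
  by rewrite addnS; apply: leq_ltn_trans (IH (ltnW hj)) h.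
have hN : N.-1 < N by rewrite prednK.
have := step _ hN; rewrite prednK // modnn => h.
have := leq_ltn_trans (mono _ hN) h.
by rewrite -{2}[phi _]addn0 ltn_add2l.
Qed.


Lemma blk_alphaP : blk alphaP = [set o].
Proof.
have hc : is_setpart (coarsest n) by case: coarsest_sp.
have bc : blk (coarsest n) = setT by rewrite /blk; case: coarsest_sp => _ ->.
by rewrite -alpha_split split_blk // ?bc ?subsetT ?inE.
Qed.

Lemma alpha_simplex : is_simplex (alpha n).
Proof.
rewrite alphaE; apply: simplex_of; first by apply/set0Pn; exists alphaP; rewrite inE.
apply/andP; split; apply/forall_inP => P; rewrite inE => /eqP ->.
  exact: alpha_proper.
by apply/forall_inP => Q; rewrite inE => /eqP ->; rewrite refines_refl //; case/and3P: alpha_proper.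
Qed.


Lemma alpha_lvl k : lvl k.+1 [set o] (alpha n) = Some ([set o], alphaP).
Proof.
rewrite /=.
have nT : ([set o] == setT) = false.
  apply/negbTE/eqP => e; pose x1 : T := Ordinal hn2.
  have : x1 \in [set o] by rewrite e inE.
  by rewrite inE => /eqP ex; move: ho; rewrite /is_one -ex.
have pc : pstar [set o] (alpha n) = coarsest n.
  case: (pstar_spec [set o] (ch_simplex alpha_simplex)) => [[_ ->]//|[pU _]].
  move: pU; rewrite inE alphaE inE => /andP[/eqP -> ].
  by rewrite blk_alphaP properE subxx andbF.
rewrite nT pc alpha_split.
have -> : alphaP != AB [set o].
  by rewrite -finest_AB; case/and3P: alpha_proper.
done.
Qed.

Lemma alpha_tog : tog (alpha n) = Some ([set o], alphaP).
Proof.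
have n0 : 0 < n by apply: leq_trans hn2.
by rewrite /tog -[in lvl n](prednK n0) alpha_lvl.
Qed.


Lemma inC_card (c : simplex n) : in_C c -> #|c| = n - 2.
Proof.
case/and3P => s /eqP d _; have : c != set0 by case/and3P: s.
rewrite -card_gt0 => h; move: d h; rewrite /dim.
move: hn3 (#|c|) => h3 m; lia.
Qed.

Lemma inC_none (c : simplex n) : is_simplex c -> tog c = None -> in_C c.
Proof.
move=> s E.
have := lvl_none (ch_simplex s) (good0 c) _ E; rewrite cards1 add1n ltnSn => /(_ isT).
set S := [set Q in c | _ & _]; rewrite -subn1 -subnDA => h.
have sS : S \subset c by apply/subsetP => Q; rewrite inE => /andP[].
have cb := chain_bound s.
have eS : S = c.
  apply/eqP; rewrite eqEcard sS /=; apply: leq_trans cb _.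
  exact: h.
apply/and3P; split => //.
  rewrite /dim; apply/eqP; move: (subset_leq_card sS) h cb.
  move: (#|S|) (#|c|) hn3 => a b h3; lia.
apply/forall_inP => P; rewrite -eS inE => /and3P[_ ? _] //.
Qed.

Lemma crit_none (c : simplex n) : tog c = None -> critical Mset c.
Proof.
move=> E; apply/forall_inP => p pM; apply/andP; split; apply/eqP => e.
  case/MsetP: (pM) => Bf [t [_ _ E2 _ _]].
  by have [E1 _] := Mset_bot' pM E2; move: E1; rewrite e E.
by case/MsetP: (pM) => Bf [t [_ _ E2 _ _]]; move: E2; rewrite e E.
Qed.

Lemma M_critical (c : simplex n) : is_simplex c -> (critical Mset c <-> (in_C c \/ c = alpha n)).
Proof.
move=> s; case E: (tog c) => [[Bf t]|]; last first.
  by split => [_|_]; [left; apply: inC_none | apply: crit_none].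
have hc := ch_simplex s.
have [pt ct bt nAt [gf [nTf tne]]] := tog_props hc E.
case tin: (t \in c).
  case: (eqVneq (c :\ t) set0) => [e0|ne0].
  -
    have ec : c = [set t].
      by apply/setP => Q; rewrite inE; move/setP: e0 => /(_ Q); rewrite !inE; case: eqP => [->|].
    split => _; last first.
      apply/forall_inP => p pM; apply/andP; split; apply/eqP => e.
        case/MsetP: (pM) => Bp [tp [_ _ E2 _ _]].
        have [E1 [ntp _]] := Mset_bot' pM E2; move: E1; rewrite e E => -[_ et].
        by move: ntp; rewrite -et e tin.
      case/MsetP: (pM) => Bp [tp [_ ne1 E2 _ e1]].
      move: E2; rewrite e E => -[_ et]; move: ne1; by rewrite e1 e -et e0 eqxx.
    right; rewrite alphaE ec; congr [set _].
    have [_ _ _ tdef _] := lvl_some hc (good0 c) E.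
    have eB : Bf = [set o].
      case: gf => _ [//|[eT|Ac]]; first by move: nTf; rewrite eT eqxx.
      by move: Ac; rewrite ec inE => /eqP eA; move: tne; rewrite eA eqxx.
    have pc : pstar Bf c = coarsest n.
      case: (pstar_spec Bf hc) => [[_ ->]//|[pU _]].
      move: pU; rewrite inE ec inE => /andP[/eqP -> ].
      by rewrite bt properE subxx andbF.
    by rewrite tdef pc eB alpha_split.
  - have pM : (c :\ t, c) \in Mset.
      by rewrite inE /= s ne0 E tin eqxx.
    split => [cr|[iC|eA]].
    + by move/forall_inP: cr => /(_ _ pM) /andP[_]; rewrite eqxx.
    + case/and3P: iC => _ _ /forall_inP /(_ _ tin); by rewrite (negbTE nAt).
    + move: ne0; rewrite eA alphaE; move: tin; rewrite eA alphaE inE => /eqP ->.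
      by move=> /set0Pn [X]; rewrite !inE => /andP[/negP h /eqP e]; case: h; rewrite e.

- have hc' := ch_addt hc E.
  have s' : is_simplex (t |: c).
    by apply: simplex_of => //; apply/set0Pn; exists t; rewrite !inE eqxx.
  have E' : tog (t |: c) = Some (Bf, t) by apply: (tog_inv hc hc' E); left.
  have ne : c != set0 by case/and3P: s.
  have pM : (c, t |: c) \in Mset.
    by rewrite inE /= s' ne E' !inE eqxx /= setU1K ?tin.
  split => [cr|[iC|eA]].
  + by move/forall_inP: cr => /(_ _ pM) /andP[]; rewrite eqxx.
  + exfalso; have := chain_bound s'; rewrite cardsU1 tin inC_card //.
    move: hn3 => h3; lia.
  + move: E; rewrite eA alpha_tog => -[_ et]; move: tin; rewrite eA -et alphaE inE eqxx.
    done.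
Qed.


Section Equiv.
Variable s : {perm T}.
Hypothesis so : s o = o.

Lemma sinj : injective s. Proof. exact: perm_inj. Qed.
Lemma memS (A : {set T}) y : (y \in s @: A) = ((s^-1)%g y \in A).
Proof. by rewrite -{1}(permKV s y) mem_imset //; exact: sinj. Qed.
Lemma subS (A B : {set T}) : (s @: A \subset s @: B) = (A \subset B).
Proof.
apply/idP/idP => [h|]; last exact: imsetS.
by apply/subsetP => x xA; move: (subsetP h (s x)); rewrite !mem_imset //; try exact: sinj; apply.
Qed.
Lemma eqS (A B : {set T}) : (s @: A == s @: B) = (A == B).
Proof. by rewrite (inj_eq (imset_inj sinj)). Qed.
Lemma properS (A B : {set T}) : (s @: A \proper s @: B) = (A \proper B).
Proof. by rewrite !properE !subS. Qed.
Lemma imsetDS (A B : {set T}) : s @: (A :\: B) = s @: A :\: s @: B.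
Proof. by apply/setP => y; rewrite !inE !memS !inE. Qed.
Lemma imsetTS : s @: [set: T] = [set: T].
Proof. by apply/setP => y; rewrite memS !inE. Qed.
Lemma so' : (s^-1)%g o = o.
Proof. by rewrite -{1}so permK. Qed.

Definition act (P : SP) := act_part s P.
Definition actc (c : simplex n) := act_simplex s c.

Lemma act_inj : injective act.
Proof. by apply: imset_inj; apply: imset_inj; exact: sinj. Qed.
Lemma actc_inj : injective actc.
Proof. by apply: imset_inj; exact: act_inj. Qed.

Lemma act_sp0 (P : SP) : is_setpart P ->
  is_setpart (act P) /\ forall x, pb (act P) x = s @: pb P ((s^-1)%g x).
Proof.
move=> hP.
have e : act P = [set (fun x => s @: pb P ((s^-1)%g x)) x | x : T].
  rewrite /act /act_part {1}(sp_img hP) -imset_comp; apply/setP => X.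
  apply/imsetP/imsetP => [[y _ ->]|[x _ ->]].
    by exists (s y) => //=; rewrite permK.
  by exists ((s^-1)%g x).
rewrite e; apply: mk_sp => [x|x y].
  by rewrite memS pb_mem.
by rewrite memS => h; rewrite (pb_same hP h).
Qed.
Lemma act_sp (P : SP) : is_setpart P -> is_setpart (act P).
Proof. by case/act_sp0. Qed.
Lemma pb_act (P : SP) x : is_setpart P -> pb (act P) x = s @: pb P ((s^-1)%g x).
Proof. by case/act_sp0. Qed.

Lemma refines_act (P Q : SP) : is_setpart P -> is_setpart Q ->
  refines (act P) (act Q) = refines P Q.
Proof.
move=> hP hQ; apply/refinesP/refinesP => //; try exact: act_sp.
  move=> h x; move: (h (s x)); by rewrite !pb_act // permK subS.
by move=> h x; rewrite !pb_act // subS.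
Qed.

Lemma act_finest : act (finest n) = finest n.
Proof.
case: (@finest_sp n) => hf ef; apply: sp_ext => //; first exact: act_sp.
by move=> x; rewrite pb_act // ef imset_set1 permKV.
Qed.
Lemma act_coarsest : act (coarsest n) = coarsest n.
Proof.
case: coarsest_sp => hc ec; apply: sp_ext => //; first exact: act_sp.
by move=> x; rewrite pb_act // ec imsetTS.
Qed.

Lemma proper_act (P : SP) : proper_part P -> proper_part (act P).
Proof.
case/and3P => hP nf nc; apply/and3P; split; first exact: act_sp.
  by rewrite -act_finest (inj_eq act_inj).
by rewrite -act_coarsest (inj_eq act_inj).
Qed.

Lemma ch_act (c : simplex n) : ch c -> ch (actc c).
Proof.
move=> hc; apply/andP; split; apply/forall_inP => P' /imsetP[P Pc ->].
  by apply: proper_act; apply: ch_proper hc Pc.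
apply/forall_inP => Q' /imsetP[Q Qc ->].
by rewrite !refines_act ?(ch_sp hc Pc) ?(ch_sp hc Qc) // (ch_cmp hc Pc Qc).
Qed.

Lemma simplex_act (c : simplex n) : is_simplex c -> is_simplex (actc c).
Proof.
move=> h; apply: simplex_of; last by apply: ch_act; apply: ch_simplex.
by rewrite /actc /act_simplex imset_eq0; case/and3P: h.
Qed.

Lemma blk_act (P : SP) : is_setpart P -> blk (act P) = s @: blk P.
Proof. by move=> h; rewrite /blk pb_act // so'. Qed.

Lemma AB_act (B : {set T}) : act (AB B) = AB (s @: B).
Proof.
apply: sp_ext; [exact: act_sp (AB_is B)|exact: AB_is|] => x.
rewrite pb_act ?AB_is // !pb_AB memS; case: ifP => // _.
by rewrite imset_set1 permKV.
Qed.

Lemma split_act (B : {set T}) (P : SP) : is_setpart P -> B \subset blk P ->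
  act (split B P) = split (s @: B) (act P).
Proof.
move=> hP sB.
have hP' := act_sp hP.
have sB' : s @: B \subset blk (act P) by rewrite blk_act // subS.
apply: sp_ext; [exact: act_sp (split_is hP sB)|exact: split_is|] => x.
rewrite pb_act ?split_is // !pb_split // /splitf memS blk_act // memS.
case: ifP => // _; case: ifP => _; first by rewrite imsetDS.
by rewrite pb_act.
Qed.

Lemma U_act (B : {set T}) (c : simplex n) : ch c ->
  U (s @: B) (actc c) = act @: U B c.
Proof.
move=> hc; apply/setP => Q'; apply/idP/imsetP.
  rewrite inE => /andP[/imsetP[Q Qc ->]]; rewrite blk_act ?(ch_sp hc Qc) // properS => pr.
  by exists Q => //; rewrite inE Qc.
move=> [Q]; rewrite inE => /andP[Qc pr] ->.
by rewrite inE blk_act ?(ch_sp hc Qc) // properS pr andbT; apply: imset_f.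
Qed.

Lemma pstar_act (B : {set T}) (c : simplex n) : ch c ->
  pstar (s @: B) (actc c) = act (pstar B c).
Proof.
move=> hc; have hc' := ch_act hc.
case: (pstar_spec B hc) => [[E0 ->]|[pU pm]].
  case: (pstar_spec (s @: B) hc') => [[_ ->]|[pU' _]]; first by rewrite act_coarsest.
  by move: pU'; rewrite U_act // E0 imset0 inE.
apply: pstar_eq => //; first by rewrite U_act //; apply: imset_f.
move=> R'; rewrite U_act // => /imsetP[R RU ->].
have sU := subsetP (U_sub B c).
by rewrite refines_act ?(ch_sp hc (sU _ RU)) ?(ch_sp hc (sU _ pU)) // pm.
Qed.

Lemma lvl_act k (B : {set T}) (c : simplex n) : ch c ->
  lvl k (s @: B) (actc c) = omap (fun p : {set T} * SP => (s @: p.1, act p.2)) (lvl k B c).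
Proof.
move=> hc; elim: k B => [//|k IH] B /=.
have -> : (s @: B == setT) = (B == setT) by rewrite -{1}imsetTS eqS.
case E: (B == setT); first by []. have nT : B != setT by rewrite E.
have hP := pstar_sp B hc; have sB := proper_sub (pstar_blk hc nT).
rewrite pstar_act // -split_act // -AB_act (inj_eq act_inj).
case: ifP => _ //.
by rewrite blk_act // IH.
Qed.

Lemma tog_act (c : simplex n) : ch c ->
  tog (actc c) = omap (fun p : {set T} * SP => (s @: p.1, act p.2)) (tog c).
Proof. by move=> hc; rewrite /tog -lvl_act // imset_set1 so. Qed.

Lemma Mset_act p : p \in Mset -> (actc p.1, actc p.2) \in Mset.
Proof.
case/MsetP => Bf [t [sp ne E tin e]].
rewrite inE /= simplex_act // tog_act ?ch_simplex // E /=.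
rewrite /actc /act_simplex imset_eq0 ne mem_imset ?tin; last exact: act_inj.
by rewrite e imsetD1_inj ?eqxx //; exact: act_inj.
Qed.

End Equiv.

End One.

Unset Implicit Arguments.
Theorem proposition11 (n : nat) (hn : 3 <= n) :
  exists M : {set simplex n * simplex n},
    [/\ is_matching M, acyclic M, equivariant M &
        forall c : simplex n, is_simplex c ->
          (critical M c <-> (in_C c \/ c = alpha n))].
Proof.
have h0 : 0 < n by apply: leq_trans hn.
pose o : 'I_n := Ordinal h0.
have ho : is_one o by [].
exists (Mset o); split.
- exact: M_match.
- exact: M_acyclic.
- move=> s fs p pM; apply: Mset_act => //.
  move/forallP: fs => /(_ o) /implyP /(_ ho) h.
  by apply: val_inj; move/eqP: h => /= ->.
- by move=> c sc; apply: (M_critical ho hn).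
Qed.
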